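(* $F:Y\to Y$ is topologically exact: for every nonempty open subset $U\subset Y$ there exists $n\ge0$ such that $F^nU\supset Y$.
   Context: Let $\mathbb{T}=\mathbb{R}/\mathbb{Z}$, $M=[0,1]\times\mathbb{T}$. Fix $\gamma>0$. Let $u:[0,\tfrac34]\times\mathbb{T}\to(0,\infty)$ be $C^2$ with $u(0,\theta)=c_0>0$. Define $f(x,\theta)=(f_1(x,\theta),4\theta\bmod1)$, $f_1(x,\theta)=x(1+x^\gamma u(x,\theta))$ for $0\le x\le\tfrac34$, $f_1=4x-3$ for $\tfrac34<x\le1$. Standing assumptions: $x(1+x^\gamma u)\le1$ on $[0,\tfrac34]\times\mathbb{T}$; $|(Df)_{(x,\theta)}v|\ge|v|$ on $[0,\tfrac34]\times\mathbb{T}$; $f_1(\tfrac34,\theta)>\tfrac{15}{16}$; $\sup|x\,\partial u/\partial x|$, $\sup|\partial u/\partial\theta|$ sufficiently small. Let $X_i=\{(x,\theta):0\le x\le f_1(\tfrac34,\tfrac{i+\theta}{4})\}$, $i=0,\dots,3$, $X=\bigcup_iX_i$, $Y=([\tfrac34,1]\times\mathbb{T})\cap X$, $\varphi$ the first return time of $f$ to $Y$, and $F=f^\varphi:Y\to Y$ the first return map. *)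

(* Defs.v *)
From Stdlib Require Import Reals.
From Coquelicot Require Import Coquelicot.
Open Scope R_scope.

(* Points of M = [0,1] x T are pairs (x, th) with 0 <= x <= 1 and th the
   representative in [0,1) of a point of T = R/Z. *)
Definition pt := (R * R)%type.

Definition inM (p : pt) : Prop := 0 <= fst p <= 1 /\ 0 <= snd p < 1.

(* x^g for x >= 0, with the convention 0^g = 0 (g > 0). *)
Definition rpow (x g : R) : R := if Req_EM_T x 0 then 0 else Rpower x g.

Definition pdx (u : R -> R -> R) (x y : R) : R := Derive (fun t => u t y) x.
Definition pdy (u : R -> R -> R) (x y : R) : R := Derive (fun t => u x t) y.

Definition has_partials (u : R -> R -> R) : Prop :=
  forall x y, ex_derive (fun t => u t y) x /\ ex_derive (fun t => u x t) y.

Definition C2_R2 (u : R -> R -> R) : Prop :=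
  has_partials u /\ has_partials (pdx u) /\ has_partials (pdy u) /\
  forall x y,
    continuity_2d_pt u x y /\ continuity_2d_pt (pdx u) x y /\
    continuity_2d_pt (pdy u) x y /\
    continuity_2d_pt (pdx (pdx u)) x y /\ continuity_2d_pt (pdy (pdx u)) x y /\
    continuity_2d_pt (pdx (pdy u)) x y /\ continuity_2d_pt (pdy (pdy u)) x y.

Definition f1 (g : R) (u : R -> R -> R) (x th : R) : R :=
  if Rle_dec x (3/4) then x * (1 + rpow x g * u x th) else 4 * x - 3.

Definition fmap (g : R) (u : R -> R -> R) (p : pt) : pt :=
  (f1 g u (fst p) (snd p), frac_part (4 * snd p)).

(* entries of the Jacobian (Df) on [0,3/4] x T:
   Df = [[a, b], [0, 4]] with a = d f1/dx, b = d f1/d th *)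
Definition dfa (g : R) (u : R -> R -> R) (x th : R) : R :=
  1 + (1 + g) * rpow x g * u x th + rpow x (1 + g) * pdx u x th.
Definition dfb (g : R) (u : R -> R -> R) (x th : R) : R :=
  rpow x (1 + g) * pdy u x th.

Definition inX (g : R) (u : R -> R -> R) (p : pt) : Prop :=
  inM p /\ exists i : nat, (i <= 3)%nat /\
    0 <= fst p <= f1 g u (3/4) ((INR i + snd p) / 4).

Definition inY (g : R) (u : R -> R -> R) (p : pt) : Prop :=
  inX g u p /\ 3/4 <= fst p <= 1.

Definition first_return (g : R) (u : R -> R -> R) (p : pt) (n : nat) (q : pt)
  : Prop :=
  (1 <= n)%nat /\ q = Nat.iter n (fmap g u) p /\ inY g u q /\
  forall k, (1 <= k)%nat -> (k < n)%nat -> ~ inY g u (Nat.iter k (fmap g u) p).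

(* F(S) = image of S under the first return map F = f^phi
   (F is defined at p exactly when phi(p) < oo) *)
Definition Fimage (g : R) (u : R -> R -> R) (S : pt -> Prop) (q : pt) : Prop :=
  exists p n, S p /\ inY g u p /\ first_return g u p n q.

Fixpoint Fiter (g : R) (u : R -> R -> R) (n : nat) (A : pt -> Prop) : pt -> Prop :=
  match n with
  | O => A
  | S m => Fimage g u (Fiter g u m A)
  end.

Definition distT (a b : R) : R :=
  Rmin (frac_part (a - b)) (1 - frac_part (a - b)).
Definition distM (p q : pt) : R :=
  Rmax (Rabs (fst p - fst q)) (distT (snd p) (snd q)).

Definition open_in_Y (g : R) (u : R -> R -> R) (U : pt -> Prop) : Prop :=
  (forall p, U p -> inY g u p) /\
  forall p, U p -> exists e, 0 < e /\
    forall q, inY g u q -> distM p q < e -> U q.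

Definition topologically_exact (g : R) (u : R -> R -> R) : Prop :=
  forall U : pt -> Prop, open_in_Y g u U -> (exists p, U p) ->
    exists n : nat, forall q, inY g u q -> Fiter g u n U q.

(* Main.v *)
Require Import Defs.
From Stdlib Require Import Reals Lra Lia ZArith ClassicalEpsilon.
From Coquelicot Require Import Coquelicot.
Open Scope R_scope.

Lemma frac_range x : 0 <= frac_part x < 1.
Proof. destruct (base_fp x); lra. Qed.

Lemma frac_spec x (k : Z) f : 0 <= f < 1 -> x = IZR k + f -> frac_part x = f.
Proof. intros H1 H2. destruct (Int_part_frac_part_spec x k f H1 H2); auto. Qed.

Lemma frac_id x : 0 <= x < 1 -> frac_part x = x.
Proof. intros H. apply (frac_spec x 0%Z x H). simpl; lra. Qed.

Lemma frac_shift x k : frac_part (x + IZR k) = frac_part x.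
Proof.
  apply (frac_spec _ (Int_part x + k)%Z). apply frac_range.
  rewrite plus_IZR. pose proof (Rplus_Int_part_frac_part x). lra.
Qed.

Lemma frac_eq x : x = IZR (Int_part x) + frac_part x.
Proof. apply Rplus_Int_part_frac_part. Qed.

Lemma frac_4frac y : frac_part (4 * frac_part y) = frac_part (4 * y).
Proof.
  pose proof (frac_eq y) as E.
  replace (4 * frac_part y) with (4 * y + IZR (- (4 * Int_part y))).
  apply frac_shift. rewrite opp_IZR, mult_IZR. lra.
Qed.

Lemma frac_frac y : frac_part (frac_part y) = frac_part y.
Proof. apply frac_id, frac_range. Qed.

Lemma frac_add_frac a b : frac_part (frac_part a + b) = frac_part (a + b).
Proof.
  pose proof (frac_eq a) as E.
  replace (frac_part a + b) with ((a + b) + IZR (- Int_part a)).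
  apply frac_shift. rewrite opp_IZR. lra.
Qed.
Record Hyp (g : R) (u : R -> R -> R) : Prop := mkHyp {
  hg : 0 < g;
  hpart : has_partials u;
  hper : forall x th, u x (th + 1) = u x th;
  hpos : forall x th, 0 <= x <= 3/4 -> 0 < u x th;
  hle1 : forall x th, 0 <= x <= 3/4 -> x * (1 + rpow x g * u x th) <= 1;
  hexp : forall x th v1 v2, 0 <= x <= 3/4 ->
       sqrt ((dfa g u x th * v1 + dfb g u x th * v2) ^ 2 + (4 * v2) ^ 2)
         >= sqrt (v1 ^ 2 + v2 ^ 2);
  h1516 : forall th, f1 g u (3/4) th > 15/16;
  hdx : forall x th, 0 <= x <= 3/4 -> Rabs (x * pdx u x th) <= 1;
  hdy : forall x th, 0 <= x <= 3/4 -> Rabs (pdy u x th) <= 1 }.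

Lemma per_nat g u (H : Hyp g u) x : forall n th, u x (th + INR n) = u x th.
Proof.
  induction n; intros th. simpl. f_equal; lra.
  rewrite S_INR. replace (th + (INR n + 1)) with ((th + INR n) + 1) by lra.
  rewrite (hper _ _ H). apply IHn.
Qed.

Lemma per_Z g u (H : Hyp g u) x th k : u x (th + IZR k) = u x th.
Proof.
  destruct (Z_le_gt_dec 0 k).
  - rewrite <- (Z2Nat.id k) by lia. rewrite <- INR_IZR_INZ. apply (per_nat g u H).
  - replace k with (- Z.of_nat (Z.to_nat (- k)))%Z by lia.
    rewrite opp_IZR, <- INR_IZR_INZ.
    rewrite <- (per_nat g u H x (Z.to_nat (-k)) (th + - INR (Z.to_nat (- k)))).
    f_equal; lra.
Qed.

Definition L (g : R) (u : R -> R -> R) (y x : R) : R := x * (1 + rpow x g * u x y).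

Lemma rpow_pos g x : 0 < x -> rpow x g = Rpower x g.
Proof. intros Hx. unfold rpow. destruct (Req_EM_T x 0); [lra|auto]. Qed.

Lemma rpow_0 g : rpow 0 g = 0.
Proof. unfold rpow. destruct (Req_EM_T 0 0); [auto|lra]. Qed.

Lemma rpow_bnd g x : 0 < g -> 0 <= x <= 1 -> 0 <= rpow x g <= 1.
Proof.
  intros Hg Hx. destruct (Req_dec x 0) as [->|Hx0]. rewrite rpow_0; lra.
  rewrite rpow_pos by lra. split. unfold Rpower. left; apply exp_pos.
  assert (E : Rpower 1 g = 1) by (unfold Rpower; rewrite ln_1, Rmult_0_r, exp_0; auto).
  rewrite <- E. apply Rle_Rpower_l; lra.
Qed.

Lemma rpow_gt0 g x : 0 < x -> 0 < rpow x g.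
Proof. intros Hx. rewrite rpow_pos by lra. unfold Rpower. apply exp_pos. Qed.

Lemma rpow_mono g a b : 0 < g -> 0 < a <= b -> rpow a g <= rpow b g.
Proof. intros Hg H. rewrite !rpow_pos by lra. apply Rle_Rpower_l; lra. Qed.

Lemma rpow_abs g x : Rabs x <= 1 -> 0 < g -> 0 <= rpow x g <= 1.
Proof.
  intros Hx Hg. destruct (Rle_dec 0 x). apply rpow_bnd; auto. apply Rabs_le_between in Hx; lra.
  unfold rpow. destruct (Req_EM_T x 0). lra. unfold Rpower, ln.
  destruct (Rlt_dec 0 x). exfalso; lra. rewrite Rmult_0_r, exp_0. lra.
Qed.

Lemma u_frac g u (H : Hyp g u) x y : u x (frac_part y) = u x y.
Proof.
  rewrite (frac_eq y) at 2. rewrite Rplus_comm. symmetry. apply (per_Z g u H).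
Qed.

Lemma L_per g u (H : Hyp g u) y k x : L g u (y + IZR k) x = L g u y x.
Proof. unfold L. rewrite (per_Z g u H); auto. Qed.

Lemma f1_left g u (H : Hyp g u) x y : x <= 3/4 -> f1 g u x (frac_part y) = L g u y x.
Proof.
  intros Hx. unfold f1, L. destruct (Rle_dec x (3/4)); [|lra]. rewrite (u_frac g u H); auto.
Qed.

Lemma f1_left' g u x y : x <= 3/4 -> f1 g u x y = L g u y x.
Proof. intros Hx. unfold f1, L. destruct (Rle_dec x (3/4)); [|lra]. auto. Qed.

Lemma f1_right g u x th : 3/4 < x -> f1 g u x th = 4 * x - 3.
Proof. intros Hx. unfold f1. destruct (Rle_dec x (3/4)); [lra|auto]. Qed.

Lemma L_ge g u (H : Hyp g u) y x : 0 <= x <= 3/4 -> x <= L g u y x.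
Proof.
  intros Hx. unfold L. pose proof (hpos _ _ H x y Hx).
  pose proof (rpow_bnd g x (hg _ _ H) ltac:(lra)).
  assert (0 <= rpow x g * u x y) by (apply Rmult_le_pos; lra). nra.
Qed.

Lemma L_0 g u y : L g u y 0 = 0.
Proof. unfold L. ring. Qed.

Lemma L_le1 g u (H : Hyp g u) y x : 0 <= x <= 3/4 -> L g u y x <= 1.
Proof. intros. unfold L. apply (hle1 _ _ H); auto. Qed.


Lemma L_deriv g u (H : Hyp g u) y x : 0 < x -> is_derive (L g u y) x (dfa g u x y).
Proof.
  intros Hx.
apply is_derive_ext_loc with (f := fun z => z * (1 + exp (g * ln z) * u z y)).
  { assert (Hloc : locally x (fun z : R => Rabs (id z - id x) < x)).
    { apply (proj1 (continuity_pt_locally id x) (continuity_pt_id x) (mkposreal x Hx)). }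
    eapply filter_imp; [|exact Hloc]. intros z Hz. unfold id in Hz.
    apply Rabs_lt_between in Hz. unfold L. rewrite rpow_pos by lra. reflexivity. }
  assert (Hd : ex_derive (fun t => u t y) x) by exact (proj1 (hpart _ _ H x y)).
assert (D : is_derive (fun z => z * (1 + exp (g * ln z) * u z y)) x
     (1 * (1 + exp (g * ln x) * u x y) +
  x * (g * (1 * / x) * exp (g * ln x) * u x y +
   exp (g * ln x) * (1 * Derive (fun x0 : R => u x0 y) x)))).
  { auto_derive. (repeat split; auto). reflexivity. }
  replace (dfa g u x y) with (1 * (1 + exp (g * ln x) * u x y) +
  x * (g * (1 * / x) * exp (g * ln x) * u x y +
   exp (g * ln x) * (1 * Derive (fun x0 : R => u x0 y) x))); [exact D|].
unfold dfa, pdx. rewrite !rpow_pos by lra.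
  replace (Rpower x (1 + g)) with (x * Rpower x g).
  unfold Rpower. set (E := exp (g * ln x)). set (D' := Derive (fun x0 : R => u x0 y) x).
field. lra.
  rewrite Rpower_plus, Rpower_1 by lra. auto.
Qed.


Lemma exd_cont (f : R -> R) x : ex_derive f x -> continuity_pt f x.
Proof. intros H. apply continuity_pt_filterlim. apply (ex_derive_continuous f x H). Qed.

Lemma mvt_lip (f : R -> R) a b K :
  (forall z, Rmin a b <= z <= Rmax a b -> ex_derive f z /\ Rabs (Derive f z) <= K) ->
  Rabs (f b - f a) <= K * Rabs (b - a).
Proof.
  intros H.
  destruct (MVT_gen f a b (Derive f)) as [c [Hc E]].
  - intros z Hz. apply Derive_correct. apply H. lra.
  - intros z Hz. apply exd_cont. apply H. lra.
  - rewrite E, Rabs_mult. apply Rmult_le_compat_r. apply Rabs_pos. apply H; auto.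
Qed.

Lemma lip_cont (f : R -> R) K : 0 <= K ->
  (forall z w, Rabs (f z - f w) <= K * Rabs (z - w)) -> forall x, continuity_pt f x.
Proof.
  intros HK H x. unfold continuity_pt, continue_in, limit1_in, limit_in. intros e He.
  exists (e / (K + 1)). split. apply Rdiv_lt_0_compat; lra.
  intros z [_ Hz]. simpl in *. unfold R_dist in *.
  eapply Rle_lt_trans. apply H.
  apply Rle_lt_trans with ((K+1) * Rabs (z - x)). 
  apply Rmult_le_compat_r. apply Rabs_pos. lra.
  replace e with ((K+1) * (e / (K+1))) by (field; lra).
  apply Rmult_lt_compat_l; lra.
Qed.

Lemma dfa_ge1 g u (H : Hyp g u) x y : 0 < x <= 3/4 -> 1 <= dfa g u x y.
Proof.
  intros Hx. pose proof (hexp _ _ H x y 1 0 ltac:(lra)) as E.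
  replace ((dfa g u x y * 1 + dfb g u x y * 0) ^ 2 + (4 * 0) ^ 2) with (Rsqr (dfa g u x y)) in E
    by (unfold Rsqr; ring).
  replace (1 ^ 2 + 0 ^ 2) with 1 in E by ring.
  rewrite sqrt_Rsqr_abs, sqrt_1 in E.
  assert (-1 < dfa g u x y).
  { unfold dfa. rewrite !rpow_pos by lra.
    rewrite Rpower_plus, Rpower_1 by lra.
    pose proof (hdx _ _ H x y ltac:(lra)) as D. apply Rabs_le_between in D.
    pose proof (rpow_bnd g x (hg _ _ H) ltac:(lra)) as B. rewrite rpow_pos in B by lra.
    pose proof (hpos _ _ H x y ltac:(lra)). pose proof (hg _ _ H).
    assert (0 <= (1 + g) * Rpower x g * u x y) by (apply Rmult_le_pos; [apply Rmult_le_pos|]; lra).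
    replace (x * Rpower x g * pdx u x y) with (Rpower x g * (x * pdx u x y)) by ring.
    assert (Rpower x g * (x * pdx u x y) >= - 1).
    { destruct (Rle_dec 0 (x * pdx u x y)). assert (0 <= Rpower x g * (x * pdx u x y)) by (apply Rmult_le_pos; lra). lra.
      assert (Rpower x g * (x * pdx u x y) >= Rpower x g * (-1)) by (apply Rle_ge, Rmult_le_compat_l; lra). lra. }
    lra. }
  destruct (Rcase_abs (dfa g u x y)). rewrite Rabs_left in E by auto. lra.
  rewrite Rabs_right in E by auto. lra.
Qed.

Lemma L_exd g u (H : Hyp g u) y x : 0 < x -> ex_derive (L g u y) x.
Proof. intros Hx. eexists. apply L_deriv; auto. Qed.

Lemma L_mono g u (H : Hyp g u) y a b : 0 <= a <= b -> b <= 3/4 -> b - a <= L g u y b - L g u y a.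
Proof.
  intros Ha Hb. destruct (Req_dec a 0) as [->|Ha0].
  rewrite L_0. pose proof (L_ge g u H y b ltac:(lra)). lra.
  destruct (MVT_gen (L g u y) a b (fun z => dfa g u z y)) as [c [Hc E]].
  - intros z Hz. rewrite Rmin_left, Rmax_right in Hz by lra. apply L_deriv; auto; lra.
  - intros z Hz. rewrite Rmin_left, Rmax_right in Hz by lra. apply exd_cont, L_exd; auto; lra.
  - rewrite Rmin_left, Rmax_right in Hc by lra. rewrite E.
    pose proof (dfa_ge1 g u H c y ltac:(lra)).
    rewrite <- (Rmult_1_l (b - a)) at 1. apply Rmult_le_compat_r; lra.
Qed.

Lemma L_cont0 g u (H : Hyp g u) y : continuity_pt (L g u y) 0.
Proof.
  assert (Cu : continuity_pt (fun t => u t y) 0) by (apply exd_cont; exact (proj1 (hpart _ _ H 0 y))).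
  unfold continuity_pt, continue_in, limit1_in, limit_in in *. intros e He.
  destruct (Cu 1 ltac:(lra)) as [d1 [Hd1 Hu]].
  set (M := 2 + Rabs (u 0 y)).
  assert (HM : 0 < M) by (unfold M; pose proof (Rabs_pos (u 0 y)); lra).
  exists (Rmin d1 (Rmin 1 (e / M))). split.
  { apply Rmin_pos; auto. apply Rmin_pos. lra. apply Rdiv_lt_0_compat; lra. }
  intros z [Dz Hz]. simpl in *. unfold R_dist in *. rewrite L_0. unfold L.
  rewrite Rminus_0_r in *.
  assert (Hz1 : Rabs z < d1) by (eapply Rlt_le_trans; [apply Hz| apply Rmin_l]).
  assert (Hz2 : Rabs z < 1) by (eapply Rlt_le_trans; [apply Hz| eapply Rle_trans; [apply Rmin_r| apply Rmin_l]]).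
  assert (Hz3 : Rabs z < e / M) by (eapply Rlt_le_trans; [apply Hz| eapply Rle_trans; [apply Rmin_r| apply Rmin_r]]).
  assert (Huz : Rabs (u z y) <= Rabs (u 0 y) + 1).
  { assert (Rabs (u z y - u 0 y) < 1). { apply Hu. split; [exact Dz| ]. rewrite Rminus_0_r. exact Hz1. }
    pose proof (Rabs_triang_inv (u z y) (u 0 y)). lra. }
  pose proof (rpow_abs g z ltac:(lra) (hg _ _ H)) as Rb.
  rewrite Rabs_mult.
  assert (Rabs (1 + rpow z g * u z y) <= M).
  { eapply Rle_trans. apply Rabs_triang. rewrite Rabs_R1, Rabs_mult.
    rewrite (Rabs_right (rpow z g)) by lra. unfold M.
    assert (rpow z g * Rabs (u z y) <= 1 * (Rabs (u 0 y) + 1)).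
    apply Rmult_le_compat; try lra. apply Rabs_pos. lra. }
  apply Rle_lt_trans with (Rabs z * M). apply Rmult_le_compat_l; auto. apply Rabs_pos.
  replace e with ((e / M) * M) by (field; lra). apply Rmult_lt_compat_r; auto.
Qed.

Lemma L_cont g u (H : Hyp g u) y x : 0 <= x <= 3/4 -> continuity_pt (L g u y) x.
Proof.
  intros Hx. destruct (Req_dec x 0) as [->|Hx0]. apply L_cont0; auto.
  apply exd_cont, L_exd; auto. lra.
Qed.

Definition clamp a b z := Rmax a (Rmin b z).

Lemma clamp_lip a b z w : Rabs (clamp a b z - clamp a b w) <= Rabs (z - w).
Proof.
  unfold clamp, Rmax, Rmin.
  destruct (Rcase_abs (z - w)) as [Hn|Hp].
  - rewrite (Rabs_left (z - w)) by auto. apply Rabs_le.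
    repeat destruct Rle_dec; lra.
  - rewrite (Rabs_right (z - w)) by auto. apply Rabs_le.
    repeat destruct Rle_dec; lra.
Qed.

Lemma clamp_id a b z : a <= z <= b -> clamp a b z = z.
Proof. intros. unfold clamp, Rmax, Rmin. repeat destruct Rle_dec; lra. Qed.

Lemma clamp_in a b z : a <= b -> a <= clamp a b z <= b.
Proof. intros. unfold clamp, Rmax, Rmin. repeat destruct Rle_dec; lra. Qed.

Lemma clamp_cont a b x : continuity_pt (clamp a b) x.
Proof.
  apply (lip_cont _ 1). lra. intros z w. rewrite Rmult_1_l. apply clamp_lip.
Qed.

Lemma L_ivt g u (H : Hyp g u) y a b v : 0 <= a <= b -> b <= 3/4 ->
  L g u y a <= v <= L g u y b -> exists x, a <= x <= b /\ L g u y x = v.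
Proof.
  intros Ha Hb Hv.
  set (f := fun z => L g u y (clamp a b z)).
  assert (Cf : continuity f).
  { intros z. unfold f. change (continuity_pt (comp (L g u y) (clamp a b)) z).
    apply continuity_pt_comp. apply clamp_cont. apply L_cont; auto.
    pose proof (clamp_in a b z ltac:(lra)). lra. }
  assert (Fa : f a = L g u y a) by (unfold f; rewrite clamp_id; auto; lra).
  assert (Fb : f b = L g u y b) by (unfold f; rewrite clamp_id; auto; lra).
  destruct (IVT_gen f a b v Cf) as [x [Hx Ex]].
  { rewrite Fa, Fb. rewrite Rmin_left, Rmax_right; lra. }
  rewrite Rmin_left, Rmax_right in Hx by lra.
  exists x. split; auto. unfold f in Ex. rewrite clamp_id in Ex; auto.
Qed.

Lemma u_lip_y g u (H : Hyp g u) x y y' : 0 <= x <= 3/4 ->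
  Rabs (u x y - u x y') <= Rabs (y - y').
Proof.
  intros Hx. rewrite <- (Rmult_1_l (Rabs (y - y'))).
  apply (mvt_lip (fun t => u x t) y' y 1).
  intros z _. split. exact (proj2 (hpart _ _ H x z)).
  apply (hdy _ _ H x z Hx).
Qed.

Lemma L_lip_y g u (H : Hyp g u) x y y' : 0 <= x <= 3/4 ->
  Rabs (L g u y x - L g u y' x) <= Rabs (y - y').
Proof.
  intros Hx. unfold L.
  replace (x * (1 + rpow x g * u x y) - x * (1 + rpow x g * u x y'))
    with ((x * rpow x g) * (u x y - u x y')) by ring.
  rewrite Rabs_mult. rewrite <- (Rmult_1_l (Rabs (y - y'))).
  pose proof (rpow_bnd g x (hg _ _ H) ltac:(lra)).
  apply Rmult_le_compat. apply Rabs_pos. apply Rabs_pos.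
  rewrite Rabs_right. rewrite <- (Rmult_1_l 1). apply Rmult_le_compat; lra.
  apply Rle_ge, Rmult_le_pos; lra.
  apply (u_lip_y g u H); auto.
Qed.

Lemma u_lip_x g u (H : Hyp g u) t x x' y : 0 < t -> t <= x <= 3/4 -> t <= x' <= 3/4 ->
  Rabs (u x y - u x' y) <= / t * Rabs (x - x').
Proof.
  intros Ht Hx Hx'.
  apply (mvt_lip (fun z => u z y) x' x (/ t)).
  intros z Hz. assert (Hz' : t <= z <= 3/4).
  { split. eapply Rle_trans; [|apply Hz]. apply Rmin_glb; lra.
    eapply Rle_trans; [apply Hz|]. apply Rmax_lub; lra. }
  split. exact (proj1 (hpart _ _ H z y)).
  pose proof (hdx _ _ H z y ltac:(lra)) as D. unfold pdx in D.
  rewrite Rabs_mult, (Rabs_right z) in D by lra.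
  apply Rmult_le_reg_l with z. lra.
  apply Rle_trans with 1. auto.
  apply Rle_trans with (t * / t). right; field; lra.
  apply Rmult_le_compat_r. left; apply Rinv_0_lt_compat; lra. lra.
Qed.

Lemma infu g u (H : Hyp g u) t : 0 < t <= 3/4 ->
  exists m, 0 < m /\ forall x y, t <= x <= 3/4 -> m <= u x y.
Proof.
  intros Ht.
  assert (Ex : forall x, exists th, 0 <= th <= 1 /\ forall th', 0 <= th' <= 1 -> u x th <= u x th').
  { intros x. destruct (continuity_ab_min (fun th => u x th) 0 1) as [mx [H1 H2]]. lra.
    intros c _. apply exd_cont. exact (proj2 (hpart _ _ H x c)).
    exists mx. split; auto. }
  set (ths := fun x => proj1_sig (constructive_indefinite_description _ (Ex x))).
  assert (Hths : forall x, 0 <= ths x <= 1 /\ forall th', 0 <= th' <= 1 -> u x (ths x) <= u x th').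
  { intros x. unfold ths. destruct (constructive_indefinite_description _ (Ex x)); simpl; auto. }
  set (phi := fun x => u (clamp t (3/4) x) (ths (clamp t (3/4) x))).
  assert (Lphi : forall z w, phi z <= phi w + / t * Rabs (z - w)).
  { intros z w. unfold phi.
    set (c := clamp t (3/4) z). set (c' := clamp t (3/4) w).
    assert (Hc : t <= c <= 3/4) by (apply clamp_in; lra).
    assert (Hc' : t <= c' <= 3/4) by (apply clamp_in; lra).
    apply Rle_trans with (u c (ths c')).
    apply (proj2 (Hths c)). apply (proj1 (Hths c')).
    pose proof (u_lip_x g u H t c c' (ths c') ltac:(lra) Hc Hc') as U.
    pose proof (clamp_lip t (3/4) z w) as CL. fold c c' in CL.
    apply Rabs_le_between in U.
    assert (/ t * Rabs (c - c') <= / t * Rabs (z - w)).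
    apply Rmult_le_compat_l; auto. left; apply Rinv_0_lt_compat; lra. lra. }
  assert (Cphi : forall x, continuity_pt phi x).
  { apply (lip_cont phi (/ t)). left; apply Rinv_0_lt_compat; lra.
    intros z w. apply Rabs_le. pose proof (Lphi z w). pose proof (Lphi w z).
    rewrite Rabs_minus_sym in H1. lra. }
  destruct (continuity_ab_min phi t (3/4)) as [xm [Hm1 Hm2]]. lra. intros; apply Cphi.
  exists (phi xm). split.
  { unfold phi. apply (hpos _ _ H). pose proof (clamp_in t (3/4) xm ltac:(lra)). lra. }
  intros x y Hx. rewrite <- (u_frac g u H).
  apply Rle_trans with (phi x). apply Hm1; auto.
  unfold phi. rewrite clamp_id by lra. apply (proj2 (Hths x)).
  pose proof (frac_range y). lra.
Qed.

Lemma fmap_right g u x y : 3/4 < x ->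
  fmap g u (x, frac_part y) = (4 * x - 3, frac_part (4 * y)).
Proof. intros Hx. unfold fmap; simpl. rewrite f1_right by auto. rewrite frac_4frac. auto. Qed.

Lemma fmap_left g u (H : Hyp g u) x y : x <= 3/4 ->
  fmap g u (x, frac_part y) = (L g u y x, frac_part (4 * y)).
Proof. intros Hx. unfold fmap; simpl. rewrite (f1_left g u H) by auto. rewrite frac_4frac. auto. Qed.

Lemma frac_int_shift z (j : nat) : frac_part (INR j + z) = frac_part z.
Proof. rewrite INR_IZR_INZ, Rplus_comm. apply frac_shift. Qed.

Lemma digit_dec (k : Z) : exists (j : nat) (q : Z), (j <= 3)%nat /\ IZR k = INR j + 4 * IZR q.
Proof.
  exists (Z.to_nat (k mod 4)), (k / 4)%Z. split.
  - pose proof (Z.mod_pos_bound k 4 ltac:(lia)). lia.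
  - rewrite INR_IZR_INZ. rewrite Z2Nat.id by (pose proof (Z.mod_pos_bound k 4 ltac:(lia)); lia).
    rewrite (Z.div_mod k 4) at 1 by lia. rewrite plus_IZR, mult_IZR. simpl. lra.
Qed.

Lemma Xmem g u (H : Hyp g u) x y : 3/4 <= x -> x <= f1 g u (3/4) y -> inY g u (x, frac_part (4 * y)).
Proof.
  intros Hx1 Hx2. rewrite (f1_left' g u) in Hx2 by lra.
  assert (Hle : L g u y (3/4) <= 1) by (apply (L_le1 g u H); lra).
  split; [split|]; simpl.
  - unfold inM; simpl. split. lra. apply frac_range.
  - destruct (digit_dec (Int_part (4 * y))) as [j [q [Hj Eq]]].
    exists j. split; auto. split. lra.
    rewrite (f1_left' g u) by lra.
    pose proof (frac_eq (4 * y)) as E.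
    replace ((INR j + frac_part (4 * y)) / 4) with (y + IZR (- q)).
    rewrite (L_per g u H). lra.
    rewrite opp_IZR. lra.
  - lra.
Qed.

Lemma inY_low g u (H : Hyp g u) x th : 3/4 <= x <= 15/16 -> 0 <= th < 1 -> inY g u (x, th).
Proof.
  intros Hx Ht. replace th with (frac_part (4 * (th / 4))).
  apply (Xmem g u H). lra. pose proof (h1516 _ _ H (th/4)). lra.
  replace (4 * (th / 4)) with th by field. apply frac_id; auto.
Qed.

Lemma notY_left g u x th : x < 3/4 -> ~ inY g u (x, th).
Proof. intros Hx [_ HY]. simpl in HY. lra. Qed.

Definition V g u c :=
  Rmax (Rmax (L g u ((INR 0 + c)/4) (3/4)) (L g u ((INR 1 + c)/4) (3/4)))
       (Rmax (L g u ((INR 2 + c)/4) (3/4)) (L g u ((INR 3 + c)/4) (3/4))).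

Lemma V_ge g u c j : (j <= 3)%nat -> L g u ((INR j + c)/4) (3/4) <= V g u c.
Proof.
  intros Hj. unfold V.
  destruct j as [|[|[|[|j]]]].
  - eapply Rle_trans; [apply Rmax_l|apply Rmax_l].
  - eapply Rle_trans; [apply Rmax_r|apply Rmax_l].
  - eapply Rle_trans; [apply Rmax_l|apply Rmax_r].
  - eapply Rle_trans; [apply Rmax_r|apply Rmax_r].
  - lia.
Qed.

Lemma V_att g u c : exists j, (j <= 3)%nat /\ L g u ((INR j + c)/4) (3/4) = V g u c.
Proof.
  unfold V. set (a0 := L g u ((INR 0 + c)/4) (3/4)). set (a1 := L g u ((INR 1 + c)/4) (3/4)).
  set (a2 := L g u ((INR 2 + c)/4) (3/4)). set (a3 := L g u ((INR 3 + c)/4) (3/4)).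
  unfold Rmax. destruct (Rle_dec a0 a1); destruct (Rle_dec a2 a3);
  [destruct (Rle_dec a1 a3)|destruct (Rle_dec a1 a2)|destruct (Rle_dec a0 a3)|destruct (Rle_dec a0 a2)].
  all: first [exists 0%nat; split; [lia|reflexivity] | exists 1%nat; split; [lia|reflexivity]
             | exists 2%nat; split; [lia|reflexivity] | exists 3%nat; split; [lia|reflexivity]].
Qed.

Lemma digit_shift g u (H : Hyp g u) z i : (i <= 3)%nat -> exists j, (j <= 3)%nat /\
  L g u ((INR i + frac_part z)/4) (3/4) = L g u ((INR j + z)/4) (3/4).
Proof.
  intros Hi. destruct (digit_dec (Z.of_nat i - Int_part z)) as [j [q [Hj Eq]]].
  exists j. split; auto.
  rewrite minus_IZR, <- INR_IZR_INZ in Eq. pose proof (frac_eq z) as E.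
  replace ((INR i + frac_part z) / 4) with ((INR j + z) / 4 + IZR q) by lra.
  apply (L_per g u H).
Qed.

Lemma inY_cut_low g u (H : Hyp g u) c t s x : 0 <= t <= s -> 3/4 <= x <= V g u c - s ->
  inY g u (x, frac_part (c + t)).
Proof.
  intros Ht Hx. destruct (V_att g u c) as [j [Hj Ej]].
  replace (c + t) with (4 * ((INR j + c + t) / 4) + IZR (- Z.of_nat j)).
  2:{ rewrite opp_IZR, <- INR_IZR_INZ. field. }
  rewrite frac_shift. apply (Xmem g u H). lra.
  rewrite (f1_left' g u) by lra.
  pose proof (L_lip_y g u H (3/4) ((INR j + c + t) / 4) ((INR j + c)/4) ltac:(lra)) as Lp.
  replace ((INR j + c + t) / 4 - (INR j + c) / 4) with (t/4) in Lp by field.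
  rewrite (Rabs_right (t/4)) in Lp by lra. apply Rabs_le_between in Lp. lra.
Qed.

Lemma notY_cut_high g u (H : Hyp g u) c t s x : 0 <= t <= s -> V g u c + s < x ->
  ~ inY g u (x, frac_part (c + t)).
Proof.
  intros Ht Hx [[_ [i [Hi Hxi]]] _]. simpl in Hxi.
  rewrite (f1_left' g u) in Hxi by lra.
  destruct (digit_shift g u H (c + t) i Hi) as [j [Hj Ej]]. rewrite Ej in Hxi.
  pose proof (V_ge g u c j Hj).
  pose proof (L_lip_y g u H (3/4) ((INR j + (c + t)) / 4) ((INR j + c)/4) ltac:(lra)) as Lp.
  replace ((INR j + (c + t)) / 4 - (INR j + c) / 4) with (t/4) in Lp by field.
  rewrite (Rabs_right (t/4)) in Lp by lra. apply Rabs_le_between in Lp. lra.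
Qed.

Definition Rect (x1 x2 c s : R) (p : pt) : Prop :=
  x1 <= fst p <= x2 /\ exists t, 0 <= t <= s /\ snd p = frac_part (c + t).
Definition Tset (b c s : R) (p : pt) : Prop :=
  3/4 < fst p <= 3/4 + b /\ exists t, 0 <= t <= s /\ snd p = frac_part (c + t).
Definition Reach g u U n (A : pt -> Prop) := forall q, A q -> Fiter g u n U q.
Definition Hp g u U n (A : pt -> Prop) := forall q, A q -> exists p k,
  Fiter g u n U p /\ (1 <= k)%nat /\ q = Nat.iter k (fmap g u) p /\
  forall i, (1 <= i)%nat -> (i < k)%nat -> ~ inY g u (Nat.iter i (fmap g u) p).
Definition Gp g u U n (A : pt -> Prop) := forall q, A q -> Fiter g u n U q \/ exists p k,
  Fiter g u n U p /\ (1 <= k)%nat /\ q = Nat.iter k (fmap g u) p /\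
  forall i, (1 <= i)%nat -> (i <= k)%nat -> ~ inY g u (Nat.iter i (fmap g u) p).

Lemma Fiter_Y g u U : open_in_Y g u U -> forall n q, Fiter g u n U q -> inY g u q.
Proof.
  intros HU n. induction n; intros q Hq.
  - apply HU; auto.
  - simpl in Hq. destruct Hq as [p [k [_ [_ [_ [_ [HY _]]]]]]]. auto.
Qed.

Lemma H_reach g u U n A : open_in_Y g u U -> Hp g u U n A -> (forall q, A q -> inY g u q) ->
  Reach g u U (S n) A.
Proof.
  intros HU HH HA q Hq. destruct (HH q Hq) as [p [k [Fp [Hk [Eq Hi]]]]].
  simpl. exists p, k. refine (conj Fp (conj (Fiter_Y g u U HU n p Fp) _)).
  unfold first_return. split; [auto|split; [auto|split; [apply HA; auto| auto]]].
Qed.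

Lemma H_G_out g u U n A : Hp g u U n A -> (forall q, A q -> ~ inY g u q) -> Gp g u U n A.
Proof.
  intros HH HA q Hq. right. destruct (HH q Hq) as [p [k [Fp [Hk [Eq Hi]]]]].
  exists p, k. repeat split; auto. intros i Hi1 Hi2.
  destruct (Nat.eq_dec i k) as [->|Hne]. rewrite <- Eq. apply HA; auto. apply Hi; lia.
Qed.

Lemma G_step g u U n (A B : pt -> Prop) : Gp g u U n A ->
  (forall q, B q -> exists p, A p /\ q = fmap g u p) -> Hp g u U n B.
Proof.
  intros HG HB q Hq. destruct (HB q Hq) as [p [Ap Eq]].
  destruct (HG p Ap) as [Fp | [p0 [k [Fp0 [Hk [Ep Hi]]]]]].
  - exists p, 1%nat. split; [auto|split;[lia|split;[simpl; auto| intros; lia]]].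
  - exists p0, (S k). split; [auto|]. split; [lia|]. split. simpl. rewrite <- Ep. auto.
    intros i Hi1 Hi2. apply Hi; lia.
Qed.

Lemma Reach_G g u U n A : Reach g u U n A -> Gp g u U n A.
Proof. intros HR q Hq. left. auto. Qed.

Lemma G_sub g u U n (A B : pt -> Prop) : Gp g u U n B -> (forall q, A q -> B q) -> Gp g u U n A.
Proof. intros HG HAB q Hq. apply HG, HAB; auto. Qed.

Lemma H_sub g u U n (A B : pt -> Prop) : Hp g u U n B -> (forall q, A q -> B q) -> Hp g u U n A.
Proof. intros HG HAB q Hq. apply HG, HAB; auto. Qed.

Lemma Reach_sub g u U n (A B : pt -> Prop) : Reach g u U n B -> (forall q, A q -> B q) -> Reach g u U n A.
Proof. intros HG HAB q Hq. apply HG, HAB; auto. Qed.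

Lemma Rect_shrink x1 x2 c s s' p : s' <= s -> Rect x1 x2 c s' p -> Rect x1 x2 c s p.
Proof. intros Hs [Hx [t [Ht Et]]]. split; auto. exists t. split; auto. lra. Qed.

Lemma right_surj g u x1 x2 c s : 3/4 < x1 -> forall q, Rect (4 * x1 - 3) (4 * x2 - 3) (4 * c) (4 * s) q ->
  exists p, Rect x1 x2 c s p /\ q = fmap g u p.
Proof.
  intros Hx1 [xq th] [Hxq [t [Ht Et]]]. simpl in *.
  exists ((xq + 3) / 4, frac_part (c + t / 4)). split.
  - split; simpl. lra. exists (t / 4). split. lra. auto.
  - rewrite fmap_right by lra. rewrite Et. f_equal. field. f_equal. field.
Qed.

Lemma left_surj g u (H : Hyp g u) y1 y2 c s : 0 <= y1 -> y1 <= y2 -> y2 <= 3/4 -> forall q,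
  Rect (L g u c y1 + s) (L g u c y2 - s) (4 * c) (4 * s) q ->
  exists p, Rect y1 y2 c s p /\ q = fmap g u p.
Proof.
  intros Hy1 Hyy Hy2 [xq th] [Hxq [t [Ht Et]]]. simpl in *.
  pose proof (L_lip_y g u H y1 (c + t/4) c ltac:(lra)) as A1.
  pose proof (L_lip_y g u H y2 (c + t/4) c ltac:(lra)) as A2.
  replace (c + t / 4 - c) with (t/4) in A1, A2 by ring.
  rewrite (Rabs_right (t/4)) in A1, A2 by lra.
  apply Rabs_le_between in A1. apply Rabs_le_between in A2.
  destruct (L_ivt g u H (c + t/4) y1 y2 xq ltac:(lra) Hy2 ltac:(lra)) as [x [Hx Ex]].
  exists (x, frac_part (c + t / 4)). split.
  - split; simpl. lra. exists (t / 4). split. lra. auto.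
  - rewrite (fmap_left g u H) by lra. rewrite Ex, Et. f_equal. f_equal. field.
Qed.

Lemma pow4_pos n : 0 < 4 ^ n.
Proof. apply pow_lt. lra. Qed.

Lemma back_chain g u (H : Hyp g u) t d : 0 < t ->
  (forall x y, t <= x <= 3/4 -> d <= L g u y x - x) ->
  forall k y xq, 3/4 <= xq -> xq < L g u (y/4) (3/4) ->
  exists x, 0 < x < 3/4 /\
    Nat.iter (S k) (fmap g u) (x, frac_part (y / 4 ^ (S k))) = (xq, frac_part y) /\
    (forall i, (1 <= i)%nat -> (i < S k)%nat ->
       fst (Nat.iter i (fmap g u) (x, frac_part (y / 4 ^ (S k)))) < 3/4) /\
    (x < t \/ INR (S k) * d <= xq - x).
Proof.
  intros Ht Hd k y xq Hxq1 Hxq2. induction k as [|k IH].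
  - destruct (L_ivt g u H (y/4) 0 (3/4) xq ltac:(lra) ltac:(lra) ltac:(rewrite L_0; lra)) as [x [Hx Ex]].
    assert (Hx0 : x <> 0) by (intro E0; rewrite E0, L_0 in Ex; lra).
    assert (Hx3 : x <> 3/4) by (intro E0; rewrite E0 in Ex; lra).
    exists x. split. lra. split.
    + simpl. replace (y / (4 * 1)) with (y / 4) by field.
      rewrite (fmap_left g u H) by lra. rewrite Ex. f_equal. f_equal. field.
    + split. intros i Hi1 Hi2. lia.
      destruct (Rlt_dec x t). left; auto. right. simpl. 
      pose proof (Hd x (y/4) ltac:(lra)). lra.
  - destruct IH as [xk [Hxk [Ek [Ik Sk]]]].
    set (y' := y / 4 ^ (S (S k))).
    pose proof (L_ge g u H y' (3/4) ltac:(lra)).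
    destruct (L_ivt g u H y' 0 (3/4) xk ltac:(lra) ltac:(lra) ltac:(rewrite L_0; lra)) as [x [Hx Ex]].
    assert (Hx0 : x <> 0) by (intro E0; rewrite E0, L_0 in Ex; lra).
    assert (Hx3 : x <> 3/4) by (intro E0; rewrite E0 in Ex; lra).
    assert (Ef : fmap g u (x, frac_part y') = (xk, frac_part (y / 4 ^ S k))).
    { rewrite (fmap_left g u H) by lra. rewrite Ex. f_equal. f_equal. unfold y'.
      rewrite <- (tech_pow_Rmult 4 (S k)). pose proof (pow4_pos (S k)). field. lra. }
    exists x. split. lra. split.
    + rewrite Nat.iter_succ_r. rewrite Ef. auto.
    + split.
      * intros i Hi1 Hi2. destruct i as [|i]. lia.
        rewrite Nat.iter_succ_r. rewrite Ef. destruct i as [|i].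
        simpl. lra. apply Ik; lia.
      * destruct (Rlt_dec x t). left; auto. right.
        pose proof (L_ge g u H y' x ltac:(lra)).
        destruct Sk as [Sk|Sk]. lra.
        pose proof (Hd x y' ltac:(lra)). rewrite S_INR. lra.
Qed.

Lemma nat_large r : exists N : nat, r < INR N.
Proof.
  destruct (archimed r) as [H1 _].
  destruct (Z_le_gt_dec (up r) 0).
  - exists 0%nat. simpl. apply IZR_le in l. lra.
  - exists (Z.to_nat (up r)). rewrite INR_IZR_INZ, Z2Nat.id by lia. auto.
Qed.

Lemma bernoulli a N : 1 <= a -> 1 + INR N * (a - 1) <= a ^ N.
Proof.
  intros Ha. induction N. simpl. lra.
  rewrite S_INR. simpl. 
  assert (0 <= INR N) by apply pos_INR.
  assert (0 <= INR N * (a - 1)) by (apply Rmult_le_pos; lra).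
  apply Rle_trans with (a * (1 + INR N * (a - 1))).
  nra. apply Rmult_le_compat_l; lra.
Qed.

Lemma d_lower g u (H : Hyp g u) t m : 0 < t <= 3/4 -> 0 < m ->
  (forall x y, t <= x <= 3/4 -> m <= u x y) ->
  forall x y, t <= x <= 3/4 -> t * rpow t g * m <= L g u y x - x.
Proof.
  intros Ht Hm Hu x y Hx. unfold L.
  replace (x * (1 + rpow x g * u x y) - x) with ((x * rpow x g) * u x y) by ring.
  pose proof (rpow_gt0 g t ltac:(lra)).
  pose proof (rpow_mono g t x (hg _ _ H) ltac:(lra)).
  apply Rmult_le_compat. apply Rmult_le_pos; lra. lra.
  apply Rmult_le_compat; lra. apply Hu; auto.
Qed.

Lemma frac_add_frac_r a b : frac_part (a + frac_part b) = frac_part (a + b).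
Proof. rewrite Rplus_comm, frac_add_frac, Rplus_comm. auto. Qed.

Lemma pair_eta (p : pt) : p = (fst p, snd p).
Proof. destruct p; auto. Qed.

Lemma notY_left' g u p : fst p < 3/4 -> ~ inY g u p.
Proof. intros Hp. rewrite (pair_eta p). apply notY_left; auto. Qed.

Definition DONE g u U := exists n b c s, 0 < b <= 3/16 /\ 0 < s /\ Reach g u U n (Tset b c s).

Lemma TtoS g u (H : Hyp g u) U : open_in_Y g u U -> forall n b c s,
  0 < b <= 3/16 -> 0 < s -> Reach g u U n (Tset b c s) ->
  exists c' s', 4 * s <= s' /\ Reach g u U (S n) (Rect (3/4) (15/16) c' s').
Proof.
  intros HU n b c s Hb Hs HR.
  set (t := 4 * b).
  destruct (infu g u H t ltac:(unfold t; lra)) as [m [Hm Hu]].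
  set (d := t * rpow t g * m).
  assert (Hd0 : 0 < d).
  { unfold d. pose proof (rpow_gt0 g t ltac:(unfold t; lra)).
    apply Rmult_lt_0_compat; auto. apply Rmult_lt_0_compat; auto. unfold t; lra. }
  assert (Hd : forall x y, t <= x <= 3/4 -> d <= L g u y x - x).
  { apply (d_lower g u H t m); auto. unfold t; lra. }
  destruct (nat_large (1 / d)) as [J HJ].
  assert (HJd : 1 < INR (S J) * d).
  { rewrite S_INR. apply Rmult_lt_compat_r with (r := d) in HJ; auto.
    replace (1 / d * d) with 1 in HJ by (field; lra). nra. }
  exists (4 ^ (S (S J)) * c), (4 ^ (S (S J)) * s).
  split.
  { simpl. pose proof (pow4_pos J).
    assert (1 <= 4 ^ J) by (apply pow_R1_Rle; lra). nra. }
  intros [xq th] [Hxq [t' [Ht' Eth]]]. simpl in Hxq, Eth.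
  set (y := 4 ^ S (S J) * c + t').
  assert (Hf : 15/16 < L g u (y/4) (3/4)).
  { rewrite <- (f1_left' g u) by lra. apply (h1516 _ _ H). }
  destruct (back_chain g u H t d ltac:(unfold t; lra) Hd J y xq ltac:(lra) ltac:(lra))
    as [x [Hx [Ei [Ii Si]]]].
  assert (Hxt : x < t) by (destruct Si; auto; lra).
  set (p := ((x + 3) / 4, frac_part (y / 4 ^ S (S J)))).
  assert (Efp : fmap g u p = (x, frac_part (y / 4 ^ S J))).
  { unfold p. rewrite fmap_right by lra. f_equal. field.
    f_equal. rewrite <- (tech_pow_Rmult 4 (S J)). pose proof (pow4_pos (S J)). field. lra. }
  assert (Tp : Tset b c s p).
  { split; unfold p; simpl. unfold t in Hxt. lra.
    exists (t' / 4 ^ S (S J)). pose proof (pow4_pos (S (S J))). split.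
    split. apply Rdiv_le_0_compat; lra.
    apply Rmult_le_reg_r with (4 ^ S (S J)); auto. unfold Rdiv. rewrite Rmult_assoc, Rinv_l by lra. lra.
    unfold p; simpl. f_equal. unfold y. simpl. field. pose proof (pow4_pos J); lra. }
  simpl. exists p, (S (S J)). split. apply HR; auto. split. apply (Fiter_Y g u U HU n p (HR p Tp)).
  split. lia. split.
  { rewrite Nat.iter_succ_r, Efp, Ei. rewrite Eth. auto. }
  split. apply (inY_low g u H). lra. rewrite Eth. apply frac_range.
  intros i Hi1 Hi2. apply notY_left'. destruct i as [|i]. lia.
  rewrite Nat.iter_succ_r, Efp. destruct i as [|i]. simpl. lra. apply Ii; lia.
Qed.

Lemma Full g u (H : Hyp g u) U : open_in_Y g u U -> forall n c s, 1 <= s ->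
  Reach g u U n (Rect (3/4) (15/16) c s) -> forall q, inY g u q -> Fiter g u (S n) U q.
Proof.
  intros HU n c s Hs HR [xq th] HY. pose proof HY as HY0.
  destruct HY as [[[Hm1 Hm2] [i [Hi Hxi]]] Hx34]. simpl in *.
  set (th1 := (INR i + th) / 4).
  assert (Hi' : INR i <= 3) by (apply (le_INR i 3) in Hi; simpl in Hi; lra).
  assert (Hth1 : 0 <= th1 < 1) by (unfold th1; pose proof (pos_INR i); lra).
  assert (Inrect : forall x th', 3/4 <= x <= 15/16 -> 0 <= th' < 1 -> Rect (3/4) (15/16) c s (x, th')).
  { intros x th' Hx Ht'. split. simpl; lra. exists (frac_part (th' - c)). split.
    pose proof (frac_range (th' - c)). lra. simpl.
    rewrite frac_add_frac_r. replace (c + (th' - c)) with th' by ring. rewrite frac_id; auto. }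
  assert (E4 : frac_part (4 * th1) = th).
  { unfold th1. replace (4 * ((INR i + th) / 4)) with (INR i + th) by field.
    rewrite frac_int_shift, frac_id; auto. }
  destruct (Rle_lt_dec (f1 g u (3/4) th1) xq) as [Heq|Hlt].
  - set (p := (3/4, th1)).
    assert (Rp : Rect (3/4) (15/16) c s p) by (apply Inrect; lra).
    simpl. exists p, 1%nat. split. apply HR; auto. split. apply (Fiter_Y g u U HU n p (HR p Rp)).
    split. lia. split.
    { simpl. unfold p, fmap. simpl. rewrite E4. f_equal. unfold th1 in *. lra. }
    split. exact HY0.
    intros k Hk1 Hk2. lia.
  - set (y := INR i + th).
    assert (Ey : y / 4 = th1) by (unfold y, th1; field).
    assert (Hf : xq < L g u (y/4) (3/4)) by (rewrite Ey, <- (f1_left' g u) by lra; auto).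
    destruct (back_chain g u H 1 0 ltac:(lra) ltac:(intros; lra) 0 y xq ltac:(lra) Hf)
      as [x [Hx [Ei [Ii Si]]]].
    set (p := ((x + 3) / 4, frac_part (y / 4 ^ 2))).
    assert (Efp : fmap g u p = (x, frac_part (y / 4 ^ 1))).
    { unfold p. rewrite fmap_right by lra. f_equal. field. f_equal. simpl. field. }
    assert (Rp : Rect (3/4) (15/16) c s p) by (apply Inrect; [lra| apply frac_range]).
    simpl. exists p, 2%nat. split. apply HR; auto. split. apply (Fiter_Y g u U HU n p (HR p Rp)).
    split. lia. split.
    { rewrite Nat.iter_succ_r, Efp, Ei. f_equal. unfold y. rewrite frac_int_shift, frac_id; auto. }
    split. exact HY0.
    intros k Hk1 Hk2. apply notY_left'. assert (k = 1)%nat by lia. subst k.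
    change (fst (fmap g u p) < 3/4). rewrite Efp. simpl. lra.
Qed.

Lemma Sgrow g u (H : Hyp g u) U : open_in_Y g u U -> forall N n c s, 0 < s -> 1 <= s * 4 ^ N ->
  Reach g u U n (Rect (3/4) (15/16) c s) -> exists n', forall q, inY g u q -> Fiter g u n' U q.
Proof.
  intros HU N. induction N as [|N IH]; intros n c s Hs HN HR.
  - exists (S n). apply (Full g u H U HU n c s); auto. simpl in HN; lra.
  - destruct (TtoS g u H U HU n (3/16) c s ltac:(lra) Hs) as [c' [s' [Hs' HR']]].
    { apply (Reach_sub g u U n _ _ HR). intros q [Hq Ht]. split; auto. lra. }
    apply (IH (S n) c' s'). lra.
    simpl in HN. pose proof (pow4_pos N). nra. auto.
Qed.

Definition RES g u U (w : R) := exists n x1 x2 c s, Gp g u U n (Rect x1 x2 c s) /\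
  3/4 < x1 /\ x1 < x2 /\ x2 <= 1 /\ 0 < s /\ w <= x2 - x1.

Lemma T_done g u (H : Hyp g u) U : open_in_Y g u U -> forall n x1 x2 c s,
  Hp g u U n (Rect x1 x2 c s) -> x1 <= 3/4 -> 3/4 < x2 -> 0 < s -> DONE g u U.
Proof.
  intros HU n x1 x2 c s HH Hx1 Hx2 Hs.
  exists (S n), (Rmin (x2 - 3/4) (3/16)), c, s.
  assert (Hm1 : Rmin (x2 - 3/4) (3/16) <= x2 - 3/4) by apply Rmin_l.
  assert (Hm2 : Rmin (x2 - 3/4) (3/16) <= 3/16) by apply Rmin_r.
  split. split; auto. apply Rmin_pos; lra. split; auto.
  apply (H_reach g u U n _ HU).
  - apply (H_sub g u U n _ _ HH). intros q [Hq Ht]. split; auto. lra.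
  - intros [x th] [Hq [t [Ht Et]]]. simpl in *. apply (inY_low g u H). lra.
    rewrite Et. apply frac_range.
Qed.

Lemma exc_ind g u (H : Hyp g u) U (HU : open_in_Y g u U) (y20 d sg W : R) :
  0 <= W -> 0 < sg -> 0 < d -> (forall x y, y20 <= x <= 3/4 -> d <= L g u y x - x) -> sg <= d/2 ->
  forall K n Y1 Y2 c, Gp g u U n (Rect Y1 Y2 c sg) -> 0 < Y1 -> Y1 < Y2 -> Y2 < 3/4 ->
  y20 <= Y2 -> 3/4 - Y2 < INR K * (d/4) -> W/2 + INR K * (2 * sg) < Y2 - Y1 ->
  DONE g u U \/ RES g u U (W/2).
Proof.
  intros HW0 Hsg Hd Hdl Hsgd K. induction K as [|K IH]; intros n Y1 Y2 c HG HY1 HY12 HY2 Hy20 HK HW.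
  { simpl in HK. lra. }
  set (Y1' := L g u c Y1 + sg). set (Y2' := L g u c Y2 - sg).
  assert (HH : Hp g u U n (Rect Y1' Y2' (4 * c) sg)).
  { apply (H_sub g u U n _ (Rect Y1' Y2' (4 * c) (4 * sg))).
    apply (G_step g u U n _ _ HG). apply (left_surj g u H); lra.
    intros q Hq. apply (Rect_shrink _ _ _ _ sg); auto. lra. }
  pose proof (Hdl Y2 c ltac:(lra)) as Dinc.
  pose proof (L_mono g u H c Y1 Y2 ltac:(lra) ltac:(lra)) as Mo.
  pose proof (L_ge g u H c Y1 ltac:(lra)) as Ge1.
  assert (Hw : Y2' - Y1' >= Y2 - Y1 - 2 * sg) by (unfold Y1', Y2'; lra).
  assert (Hup : Y2' >= Y2 + d/2) by (unfold Y2'; lra).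
  rewrite S_INR in HK, HW.
  destruct (Rle_lt_dec Y2' (3/4)) as [Hle|Hgt].
  - set (slack := Y2' - Y1' - (W/2 + INR K * (2 * sg))).
    assert (Hsl : 0 < slack) by (unfold slack; lra).
    set (rho := Rmin (slack/2) (d/4)).
    assert (Hr1 : rho <= slack/2) by apply Rmin_l.
    assert (Hr2 : rho <= d/4) by apply Rmin_r.
    assert (Hr0 : 0 < rho) by (apply Rmin_pos; lra).
    apply (IH n Y1' (Y2' - rho) (4 * c)).
    + apply (H_G_out g u U n).
      apply (H_sub g u U n _ _ HH). intros q [Hq Ht]. split; auto. lra.
      intros q [Hq _]. apply notY_left'. lra.
    + unfold Y1'; lra.
    + pose proof (pos_INR K).
      assert (0 <= INR K * (2 * sg)) by (apply Rmult_le_pos; lra).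
      unfold slack in *. lra.
    + lra.
    + lra.
    + lra.
    + unfold slack in *. lra.
  - destruct (Rle_lt_dec Y1' (3/4)) as [H1|H1].
    + left. apply (T_done g u H U HU n Y1' Y2' (4 * c) sg); auto.
    + right. exists (S n), Y1', Y2', (4 * c), sg.
      split.
      { apply Reach_G. apply (H_reach g u U n _ HU HH).
        intros [x th] [Hx [t [Ht Et]]]. simpl in *. rewrite Et.
        replace (4 * c + t) with (4 * (c + t / 4)) by field.
        apply (Xmem g u H). lra. rewrite (f1_left' g u) by lra.
        pose proof (L_lip_y g u H (3/4) (c + t/4) c ltac:(lra)) as Lp.
        replace (c + t / 4 - c) with (t/4) in Lp by ring.
        rewrite (Rabs_right (t/4)) in Lp by lra. apply Rabs_le_between in Lp.
        pose proof (L_mono g u H c Y2 (3/4) ltac:(lra) ltac:(lra)).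
        unfold Y2' in Hx. lra. }
      pose proof (L_le1 g u H c Y2 ltac:(lra)). pose proof (pos_INR K).
      assert (0 <= INR K * (2 * sg)) by (apply Rmult_le_pos; lra).
      unfold Y2' in *. repeat split; lra.
Qed.

Lemma exc g u (H : Hyp g u) U (HU : open_in_Y g u U) n y1 y2 c s :
  Gp g u U n (Rect y1 y2 c s) -> 0 < y1 -> y1 < y2 -> y2 < 3/4 -> 0 < s ->
  DONE g u U \/ RES g u U ((y2 - y1)/2).
Proof.
  intros HG Hy1 Hy12 Hy2 Hs.
  set (W := y2 - y1).
  destruct (infu g u H y2 ltac:(lra)) as [m [Hm Hu]].
  set (d := y2 * rpow y2 g * m).
  assert (Hd0 : 0 < d).
  { unfold d. pose proof (rpow_gt0 g y2 ltac:(lra)).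
    apply Rmult_lt_0_compat; auto. apply Rmult_lt_0_compat; auto; lra. }
  assert (Hdl : forall x y, y2 <= x <= 3/4 -> d <= L g u y x - x).
  { apply (d_lower g u H y2 m); auto. lra. }
  destruct (nat_large ((3/4) / (d/4))) as [K HK].
  assert (HK' : 3/4 < INR K * (d/4)).
  { apply Rmult_lt_compat_r with (r := d/4) in HK. 2: lra.
    replace (3 / 4 / (d / 4) * (d / 4)) with (3/4) in HK by (field; lra). lra. }
  pose proof (pos_INR K) as HK0.
  set (sg := Rmin s (Rmin (d/2) (W / (8 * (INR K + 1))))).
  assert (Hsg1 : sg <= s) by apply Rmin_l.
  assert (Hsg2 : sg <= d/2) by (eapply Rle_trans; [apply Rmin_r| apply Rmin_l]).
  assert (Hsg3 : sg <= W / (8 * (INR K + 1))) by (eapply Rle_trans; [apply Rmin_r| apply Rmin_r]).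
  assert (Hsg0 : 0 < sg).
  { apply Rmin_pos; auto. apply Rmin_pos. lra. apply Rdiv_lt_0_compat. unfold W; lra. lra. }
  apply (exc_ind g u H U HU y2 d sg W ltac:(unfold W; lra) Hsg0 Hd0 Hdl Hsg2 K n y1 y2 c); auto.
  - apply (G_sub g u U n _ _ HG). intros q Hq. apply (Rect_shrink _ _ _ _ sg); auto.
  - lra.
  - lra.
  - assert (INR K * (2 * sg) <= W / 4).
    { apply Rle_trans with ((INR K + 1) * (2 * (W / (8 * (INR K + 1))))).
      apply Rmult_le_compat; lra.
      right. field. lra. }
    unfold W in *. lra.
Qed.

Lemma phase1 g u (H : Hyp g u) U (HU : open_in_Y g u U) : forall N n x1 x2 c s,
  Gp g u U n (Rect x1 x2 c s) -> 3/4 < x1 -> x1 < x2 -> x2 <= 1 -> 0 < s ->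
  1 < (x2 - x1) * (3/2) ^ N -> DONE g u U.
Proof.
  intros N. induction N as [|N IH]; intros n x1 x2 c s HG Hx1 Hx12 Hx2 Hs HN.
  { simpl in HN. lra. }
  set (w := x2 - x1).
  assert (Cont : forall n' x1' x2' c' s', Gp g u U n' (Rect x1' x2' c' s') -> 3/4 < x1' -> x1' < x2' ->
     x2' <= 1 -> 0 < s' -> 3 * w / 2 <= x2' - x1' -> DONE g u U).
  { intros n' x1' x2' c' s' HG' H1 H2 H3 H4 H5. apply (IH n' x1' x2' c' s'); auto.
    simpl in HN. pose proof (pow_lt (3/2) N ltac:(lra)).
    apply Rlt_le_trans with (w * (3 / 2 * (3 / 2) ^ N)). auto.
    replace (w * (3 / 2 * (3 / 2) ^ N)) with ((3 * w / 2) * (3/2)^N) by field.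
    apply Rmult_le_compat_r; lra. }
  set (sg := Rmin s (w/8)).
  assert (Hsg1 : sg <= s) by apply Rmin_l.
  assert (Hsg2 : sg <= w/8) by apply Rmin_r.
  assert (Hsg0 : 0 < sg) by (apply Rmin_pos; unfold w; lra).
  set (a := 4 * x1 - 3). set (b := 4 * x2 - 3).
  assert (HH : Hp g u U n (Rect a b (4 * c) sg)).
  { apply (H_sub g u U n _ (Rect a b (4 * c) (4 * sg))).
    apply (G_step g u U n (Rect x1 x2 c sg)).
    apply (G_sub g u U n _ _ HG). intros q Hq. apply (Rect_shrink _ _ _ _ sg); auto.
    apply right_surj; auto.
    intros q Hq. apply (Rect_shrink _ _ _ _ sg); auto. lra. }
  destruct (Rle_lt_dec a (3/4)) as [Ha|Ha].
  - destruct (Rle_lt_dec b (3/4)) as [Hb|Hb].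
    + assert (HG2 : Gp g u U n (Rect a (b - w) (4 * c) sg)).
      { apply (H_G_out g u U n). apply (H_sub g u U n _ _ HH). intros q [Hq Ht]. split; auto. lra.
        intros q [Hq _]. apply notY_left'. unfold w in *; lra. }
      assert (E1 : 0 < a) by (unfold a; lra).
      assert (E2 : a < b - w) by (unfold a, b, w; lra).
      assert (E3 : b - w < 3/4) by (unfold w; lra).
      destruct (exc g u H U HU n a (b - w) (4 * c) sg HG2 E1 E2 E3 Hsg0) as [D|Hres]. auto.
      destruct Hres as (n' & x1' & x2' & c' & s' & G' & R1 & R2 & R3 & R4 & R5).
      apply (Cont n' x1' x2' c' s'); auto. unfold a, b, w in *. lra.
    + apply (T_done g u H U HU n a b (4 * c) sg); auto.
  - set (Vc := V g u (4 * c)).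
    destruct (Rle_lt_dec (a + 3 * w / 2) (Vc - sg)) as [Hv|Hv].
    + apply (Cont (S n) a (Rmin b (Vc - sg)) (4 * c) sg); auto.
      * apply Reach_G. apply (H_reach g u U n _ HU).
        apply (H_sub g u U n _ _ HH). intros q [Hq Ht]. split; auto. pose proof (Rmin_l b (Vc - sg)). lra.
        intros [x th] [Hq [t [Ht Et]]]. simpl in *. rewrite Et.
        pose proof (Rmin_r b (Vc - sg)). apply (inY_cut_low g u H (4 * c) t sg x); auto. unfold Vc in *. lra.
      * apply Rmin_glb_lt; unfold a, b, w in *; lra.
      * pose proof (Rmin_l b (Vc - sg)). unfold b in *; lra.
      * unfold Rmin. destruct (Rle_dec b (Vc - sg)); unfold a, b, w in *; lra.
    + apply (Cont n (Rmax a (Vc + 2 * sg)) b (4 * c) sg); auto.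
      * apply (H_G_out g u U n). apply (H_sub g u U n _ _ HH). intros q [Hq Ht]. split; auto.
        pose proof (Rmax_l a (Vc + 2 * sg)). lra.
        intros [x th] [Hq [t [Ht Et]]]. simpl in *. rewrite Et.
        pose proof (Rmax_r a (Vc + 2 * sg)). apply (notY_cut_high g u H (4 * c) t sg x); auto. unfold Vc in *. lra.
      * pose proof (Rmax_l a (Vc + 2 * sg)). lra.
      * apply Rmax_lub_lt; unfold a, b, w in *; lra.
      * unfold b in *; lra.
      * unfold Rmax. destruct (Rle_dec a (Vc + 2 * sg)); unfold a, b, w in *; lra.
Qed.

Lemma distT_small th0 t : 0 <= t < 1 -> 0 <= th0 < 1 -> distT th0 (frac_part (th0 + t)) <= t.
Proof.
  intros Ht Hth. unfold distT.
  assert (E : frac_part (th0 - frac_part (th0 + t)) = frac_part (- t)).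
  { pose proof (frac_eq (th0 + t)) as E.
    replace (th0 - frac_part (th0 + t)) with (- t + IZR (Int_part (th0 + t))) by lra.
    apply frac_shift. }
  rewrite E. destruct (Req_dec t 0) as [->|Ht0].
  - rewrite Ropp_0, fp_R0. unfold Rmin. destruct Rle_dec; lra.
  - rewrite (frac_spec (- t) (-1)%Z (1 - t)) by (simpl; lra).
    unfold Rmin. destruct Rle_dec; lra.
Qed.

Lemma start g u (H : Hyp g u) U (HU : open_in_Y g u U) p0 : U p0 ->
  exists x1 x2 c s, Reach g u U 0 (Rect x1 x2 c s) /\ 3/4 < x1 /\ x1 < x2 /\ x2 <= 1 /\ 0 < s.
Proof.
  intros Up. destruct HU as [HUY HUo].
  destruct (HUo p0 Up) as [e [He Hball]].
  pose proof (HUY p0 Up) as HY. destruct p0 as [x0 th0].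
  destruct HY as [[[Hm1 Hm2] [i [Hi Hxi]]] Hx34]. simpl in *.
  assert (Dist : forall x t, Rabs (x0 - x) < e -> 0 <= t <= e/2 -> t < 1 ->
     distM (x0, th0) (x, frac_part (th0 + t)) < e).
  { intros x t Hx Ht Ht1. unfold distM. simpl. apply Rmax_lub_lt. auto.
    pose proof (distT_small th0 t ltac:(lra) Hm2). lra. }
  destruct (Rlt_le_dec x0 (15/16)) as [Hlo|Hhi].
  - set (dl := Rmin e (15/16 - x0) / 4).
    assert (Hdl0 : 0 < dl) by (unfold dl; apply Rdiv_lt_0_compat; [apply Rmin_pos|]; lra).
    assert (Hdl1 : dl <= e/4) by (unfold dl; pose proof (Rmin_l e (15/16 - x0)); lra).
    assert (Hdl2 : dl <= (15/16 - x0)/4) by (unfold dl; pose proof (Rmin_r e (15/16 - x0)); lra).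
    exists (x0 + dl), (x0 + 2 * dl), th0, (Rmin (e/2) (1/2)).
    assert (Hs1 : Rmin (e/2) (1/2) <= e/2) by apply Rmin_l.
    assert (Hs2 : Rmin (e/2) (1/2) <= 1/2) by apply Rmin_r.
    split.
    + intros [x th] [Hx [t [Ht Et]]]. simpl in *. rewrite Et. simpl.
      apply Hball. apply (inY_low g u H). lra. apply frac_range.
      apply Dist. apply Rabs_lt_between. lra. lra. lra.
    + split. lra. split. lra. split. lra. apply Rmin_pos; lra.
  - set (dl := Rmin e (1/8) / 4).
    assert (Hdl0 : 0 < dl) by (unfold dl; apply Rdiv_lt_0_compat; [apply Rmin_pos|]; lra).
    assert (Hdl1 : dl <= e/4) by (unfold dl; pose proof (Rmin_l e (1/8)); lra).
    assert (Hdl2 : dl <= 1/32) by (unfold dl; pose proof (Rmin_r e (1/8)); lra).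
    exists (x0 - 2 * dl), (x0 - dl), th0, dl.
    split.
    + intros [x th] [Hx [t [Ht Et]]]. simpl in *. rewrite Et. simpl.
      apply Hball.
      * replace (th0 + t) with (4 * ((INR i + th0 + t) / 4) + IZR (- Z.of_nat i)).
        2:{ rewrite opp_IZR, <- INR_IZR_INZ. field. }
        rewrite frac_shift. apply (Xmem g u H). lra.
        rewrite (f1_left' g u) by lra. rewrite (f1_left' g u) in Hxi by lra.
        pose proof (L_lip_y g u H (3/4) ((INR i + th0 + t) / 4) ((INR i + th0)/4) ltac:(lra)) as Lp.
        replace ((INR i + th0 + t) / 4 - (INR i + th0) / 4) with (t/4) in Lp by field.
        rewrite (Rabs_right (t/4)) in Lp by lra. apply Rabs_le_between in Lp. lra.
      * apply Dist. apply Rabs_lt_between. lra. lra. lra.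
    + split. lra. split. lra. split. lra. lra.
Qed.

Theorem proposition2p3 :
  forall g : R, 0 < g ->
  forall c0 : R, 0 < c0 ->
  exists eps : R, 0 < eps /\
  forall u : R -> R -> R,
    C2_R2 u ->
    (forall x th, u x (th + 1) = u x th) ->
    (forall x th, 0 <= x <= 3/4 -> 0 < u x th) ->
    (forall th, u 0 th = c0) ->
    (forall x th, 0 <= x <= 3/4 -> x * (1 + rpow x g * u x th) <= 1) ->
    (forall x th v1 v2, 0 <= x <= 3/4 ->
       sqrt ((dfa g u x th * v1 + dfb g u x th * v2) ^ 2 + (4 * v2) ^ 2)
         >= sqrt (v1 ^ 2 + v2 ^ 2)) ->
    (forall th, f1 g u (3/4) th > 15/16) ->
    (forall x th, 0 <= x <= 3/4 -> Rabs (x * pdx u x th) <= eps) ->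
    (forall x th, 0 <= x <= 3/4 -> Rabs (pdy u x th) <= eps) ->
    topologically_exact g u.
Proof.
  intros g Hg c0 Hc0. exists 1. split. lra.
  intros u HC Hper Hpos Hu0 Hle Hexp H1516 Hdx Hdy.
  assert (H : Hyp g u) by (constructor; auto; apply HC).
  intros U HU [p0 Hp0].
  destruct (start g u H U HU p0 Hp0) as [x1 [x2 [c [s [HR [Hx1 [Hx12 [Hx2 Hs]]]]]]]].
  destruct (nat_large (2 / (x2 - x1))) as [N HN].
  assert (HN' : 1 < (x2 - x1) * (3/2) ^ N).
  { pose proof (bernoulli (3/2) N ltac:(lra)).
    apply Rmult_lt_compat_r with (r := x2 - x1) in HN; [|lra].
    replace (2 / (x2 - x1) * (x2 - x1)) with 2 in HN by (field; lra).
    apply Rlt_le_trans with ((x2 - x1) * (1 + INR N * (3 / 2 - 1))).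
    nra. apply Rmult_le_compat_l; lra. }
  destruct (phase1 g u H U HU N 0 x1 x2 c s (Reach_G g u U 0 _ HR) Hx1 Hx12 Hx2 Hs HN')
    as [n [b [c' [s' [Hb [Hs' HT]]]]]].
  destruct (TtoS g u H U HU n b c' s' Hb Hs' HT) as [c2 [s2 [Hs2 HR2]]].
  destruct (nat_large (1 / s2)) as [M HM].
  assert (HM' : 1 <= s2 * 4 ^ M).
  { pose proof (bernoulli 4 M ltac:(lra)).
    assert (0 < s2) by lra.
    apply Rmult_lt_compat_r with (r := s2) in HM; auto.
    replace (1 / s2 * s2) with 1 in HM by (field; lra).
    apply Rle_trans with (s2 * (1 + INR M * (4 - 1))). nra.
    apply Rmult_le_compat_l; lra. }
  destruct (Sgrow g u H U HU M (S n) c2 s2 ltac:(lra) HM' HR2) as [n' Hn'].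
  exists n'. auto.
Qed.
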